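(* Let $c\in Z^1(G,M(\mathbb{A})^\times)$ be continuous. (i) If $c^{-1}:r\mapsto c(r)^{-1}$ is also continuous, then for every $a\in\mathbb{A}$ the map $r\in G\mapsto\alpha_r(a)\,c(r)\in M(\mathbb{A})$ is continuous. (ii) The same conclusion holds for any continuous $c\in Z^1(G,Z(M(\mathbb{A}))^\times)$.
   Context: $\mathbb{A}$ is a $C^*$-algebra, $M(\mathbb{A})$ its multiplier algebra with the strict topology (all continuity statements are for this topology), $M(\mathbb{A})^\times$ its invertible elements, $Z(M(\mathbb{A}))^\times$ the invertible central multipliers. $(\mathbb{A},G,\alpha)$ is a $C^*$-dynamical system ($G$ second-countable locally compact, $\alpha:G\to\mathrm{Aut}(\mathbb{A})$ with $r\mapsto\alpha_r(a)$ norm-continuous), extended to $M(\mathbb{A})$. For a subgroup $X\subset M(\mathbb{A})^\times$, $Z^1(G,X)$ is the set of maps $c:G\to X$ with $c(rr')=c(r)\alpha_r[c(r')]$ for all $r,r'$. *)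

(* Defs.v *)
From HB Require Import structures.
From mathcomp Require Import all_boot all_order all_algebra.
From mathcomp Require Import all_classical all_reals all_analysis.
From mathcomp Require Import complex.
Set Implicit Arguments. Unset Strict Implicit. Unset Printing Implicit Defensive.
Import Order.TTheory GRing.Theory Num.Theory.
Import numFieldNormedType.Exports.
Local Open Scope ring_scope.

Definition is_Cstar_algebra (C : numClosedFieldType)
    (A : completeNormedModType C) (mul : A -> A -> A) (star : A -> A) : Prop :=
  ((forall a b c, mul (mul a b) c = mul a (mul b c)) /\ (forall (k : C) a b c, mul (k *: a + b) c = k *: mul a c + mul b c) /\ (forall (k : C) a b c, mul a (k *: b + c) = k *: mul a b + mul a c) /\ (forall a b, `|mul a b| <= `|a| * `|b|) /\ (forall (k : C) a b, star (k *: a + b) = k^* *: star a + star b) /\ (forall a, star (star a) = a) /\ (forall a b, star (mul a b) = mul (star b) (star a)) /\ (forall a, `|mul (star a) a| = `|a| ^+ 2)).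

Definition is_star_automorphism (C : numClosedFieldType)
    (A : completeNormedModType C) (mul : A -> A -> A) (star : A -> A)
    (f : A -> A) : Prop :=
  ((forall (k : C) a b, f (k *: a + b) = k *: f a + f b) /\ (forall a b, f (mul a b) = mul (f a) (f b)) /\ (forall a, f (star a) = star (f a)) /\ bijective f).

(* A multiplier m is a pair (L, R) of maps A -> A with  x L(y) = R(x) y;
   m acts by  m a := L a  and  a m := R a. *)
Definition multiplier (A : Type) := ((A -> A) * (A -> A))%type.

Definition is_multiplier (A : Type) (mul : A -> A -> A) (m : multiplier A) :=
  forall x y, mul x (m.1 y) = mul (m.2 x) y.

Definition mult_mul (A : Type) (m n : multiplier A) : multiplier A :=
  (m.1 \o n.1, n.2 \o m.2).
Definition mult_one (A : Type) : multiplier A := (id, id).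
Definition mult_eq (A : Type) (m n : multiplier A) : Prop :=
  m.1 =1 n.1 /\ m.2 =1 n.2.

Definition mult_of (A : Type) (mul : A -> A -> A) (a : A) : multiplier A :=
  (mul a, fun x => mul x a).

Definition mult_inverse (A : Type) (mul : A -> A -> A) (m n : multiplier A) :=
  is_multiplier mul n /\
  mult_eq (mult_mul m n) (mult_one A) /\ mult_eq (mult_mul n m) (mult_one A).
Definition mult_invertible (A : Type) (mul : A -> A -> A) (m : multiplier A) :=
  is_multiplier mul m /\ exists n, mult_inverse mul m n.

Definition mult_central (A : Type) (mul : A -> A -> A) (m : multiplier A) :=
  is_multiplier mul m /\
  forall n, is_multiplier mul n -> mult_eq (mult_mul m n) (mult_mul n m).

(* strict continuity of a map into M(A): the strict topology is the initial
   topology for the maps m |-> m a and m |-> a m (a in A), so f is strictly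
   continuous iff all r |-> f(r) a and r |-> a f(r) are norm-continuous. *)
Definition strictly_continuous (T : topologicalType) (C : numClosedFieldType)
    (A : completeNormedModType C) (f : T -> multiplier A) : Prop :=
  forall a, continuous (fun r => (f r).1 a) /\ continuous (fun r => (f r).2 a).

Definition is_lc_group (G : topologicalType)
    (gmul : G -> G -> G) (gone : G) (ginv : G -> G) : Prop :=
  ((forall x y z, gmul (gmul x y) z = gmul x (gmul y z)) /\ (forall x, gmul gone x = x /\ gmul x gone = x) /\ (forall x, gmul (ginv x) x = gone /\ gmul x (ginv x) = gone) /\ continuous (fun p : G * G => gmul p.1 p.2) /\ continuous ginv /\ hausdorff_space G /\ locally_compact [set: G] /\ second_countable (T := G)).

Definition is_Cstar_dynamical_system (G : topologicalType)
    (gmul : G -> G -> G) (gone : G) (ginv : G -> G)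
    (C : numClosedFieldType) (A : completeNormedModType C)
    (mul : A -> A -> A) (star : A -> A) (alpha : G -> A -> A) : Prop :=
  (is_lc_group gmul gone ginv /\ is_Cstar_algebra mul star /\ (forall r, is_star_automorphism mul star (alpha r)) /\ (forall r s a, alpha (gmul r s) a = alpha r (alpha s a)) /\ (forall a, alpha gone a = a) /\ (forall a, continuous (fun r => alpha r a))).

Definition alpha_mult (G : Type) (ginv : G -> G) (A : Type)
    (alpha : G -> A -> A) (r : G) (m : multiplier A) : multiplier A :=
  (alpha r \o m.1 \o alpha (ginv r), alpha r \o m.2 \o alpha (ginv r)).

Definition is_cocycle (G : Type) (gmul : G -> G -> G) (ginv : G -> G)
    (A : Type) (alpha : G -> A -> A) (X : multiplier A -> Prop)
    (c : G -> multiplier A) : Prop :=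
  (forall r, X (c r)) /\
  forall r r', mult_eq (c (gmul r r')) (mult_mul (c r) (alpha_mult ginv alpha r (c r'))).

(* Main.v *)
Require Import Defs.
From HB Require Import structures.
From mathcomp Require Import all_boot all_order all_algebra.
From mathcomp Require Import all_classical all_reals all_analysis.
From mathcomp Require Import complex.
Import Order.TTheory GRing.Theory Num.Theory.
Import numFieldNormedType.Exports.
Local Open Scope ring_scope.
Local Open Scope complex_scope.
Set Implicit Arguments. Unset Strict Implicit.
From mathcomp Require Import ring.
Section Basics.
Variable R : realType.
Variable A : completeNormedModType R[i].
Variables (mul : A -> A -> A) (star : A -> A).
Hypothesis HC : is_Cstar_algebra mul star.

Lemma CmulA a b c : mul (mul a b) c = mul a (mul b c).
Proof. by case: HC. Qed.
Lemma CmulDl a b c : mul (a + b) c = mul a c + mul b c.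
Proof. by case: HC => _ [H _]; have := H 1 a b c; rewrite !scale1r. Qed.
Lemma CmulDr a b c : mul a (b + c) = mul a b + mul a c.
Proof. by case: HC => _ [_ [H _]]; have := H 1 a b c; rewrite !scale1r. Qed.
Lemma Cmul0l c : mul 0 c = 0.
Proof. by apply: (addrI (mul 0 c)); rewrite -CmulDl !addr0. Qed.
Lemma Cmul0r c : mul c 0 = 0.
Proof. by apply: (addrI (mul c 0)); rewrite -CmulDr !addr0. Qed.
Lemma CmulZl k a c : mul (k *: a) c = k *: mul a c.
Proof. by case: HC => _ [H _]; have := H k a 0 c; rewrite !addr0 Cmul0l addr0. Qed.
Lemma CmulZr k a c : mul a (k *: c) = k *: mul a c.
Proof. by case: HC => _ [_ [H _]]; have := H k a c 0; rewrite !addr0 Cmul0r addr0. Qed.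
Lemma CmulNl a c : mul (- a) c = - mul a c.
Proof. by rewrite -scaleN1r CmulZl scaleN1r. Qed.
Lemma CmulNr a c : mul a (- c) = - mul a c.
Proof. by rewrite -scaleN1r CmulZr scaleN1r. Qed.
Lemma CmulBl a b c : mul (a - b) c = mul a c - mul b c.
Proof. by rewrite CmulDl CmulNl. Qed.
Lemma CmulBr a b c : mul a (b - c) = mul a b - mul a c.
Proof. by rewrite CmulDr CmulNr. Qed.
Lemma Cnorm_mul a b : `|mul a b| <= `|a| * `|b|.
Proof. by case: HC => _ [_ [_ [H _]]]. Qed.
Lemma CstarDZ (k : R[i]) a b : star (k *: a + b) = k^* *: star a + star b.
Proof. by case: HC => _ [_ [_ [_ [H _]]]]. Qed.
Lemma CstarK a : star (star a) = a.
Proof. by case: HC => _ [_ [_ [_ [_ [H _]]]]]. Qed.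
Lemma Cstar_mul a b : star (mul a b) = mul (star b) (star a).
Proof. by case: HC => _ [_ [_ [_ [_ [_ [H _]]]]]]. Qed.
Lemma Ccstar a : `|mul (star a) a| = `|a| ^+ 2.
Proof. by case: HC => _ [_ [_ [_ [_ [_ [_ H]]]]]]. Qed.
Lemma CstarD a b : star (a + b) = star a + star b.
Proof. by have := CstarDZ 1 a b; rewrite scale1r conjC1 scale1r. Qed.
Lemma Cstar0 : star 0 = 0.
Proof. by apply: (addrI (star 0)); rewrite -CstarD !addr0. Qed.
Lemma CstarZ k a : star (k *: a) = k^* *: star a.
Proof. by have := CstarDZ k a 0; rewrite addr0 Cstar0 addr0. Qed.
Lemma CstarN a : star (- a) = - star a.
Proof. by rewrite -scaleN1r CstarZ rmorphN1 scaleN1r. Qed.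
Lemma CstarB a b : star (a - b) = star a - star b.
Proof. by rewrite CstarD CstarN. Qed.

Lemma Cnorm_star_le a : `|a| <= `|star a|.
Proof.
have [->|a0] := eqVneq a 0; first by rewrite normr0.
have ha : 0 < `|a| by rewrite normr_gt0.
rewrite -(ler_pM2r ha) -expr2 -Ccstar; exact: Cnorm_mul.
Qed.
Lemma Cnorm_star a : `|star a| = `|a|.
Proof. by apply/le_anti; rewrite Cnorm_star_le -{2}(CstarK a) Cnorm_star_le. Qed.
Lemma conji : ((Complex 0 1 : R[i])^*)%R = - Complex 0 1.
Proof. by apply/eqP; rewrite eq_complex /= oppr0 !eqxx. Qed.
Lemma ii : (Complex 0 1 : R[i]) * Complex 0 1 = -1.
Proof. by rewrite -expr2 sqr_i. Qed.
Lemma conjreal (x : R) : ((x%:C)^*)%R = x%:C.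
Proof. by apply/eqP; rewrite eq_complex /= oppr0 !eqxx. Qed.
End Basics.
Section L.
Variable R : realType.
Variable A : completeNormedModType R[i].
Variables (mul : A -> A -> A) (star : A -> A).
Hypothesis HC : is_Cstar_algebra mul star.

Lemma normL p q : star p = p -> star q = q -> mul p q = mul q p ->
  `|p| ^+ 2 <= `|mul p p + mul q q|.
Proof.
move=> sp sq pq.
set i := Complex 0 1 : R[i].
set z := p + i *: q.
have sz : star z = p - i *: q.
  by rewrite /z (CstarD HC) (CstarZ HC) conji sp sq scaleNr.
have zz : mul (star z) z = mul p p + mul q q.
  rewrite sz /z (CmulDr HC) !(CmulBl HC) !(CmulZl HC) !(CmulZr HC) scalerA ii scaleN1r pq.
  by rewrite opprK addrA subrK.
have hp : `|p| <= `|z|.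
  rewrite -(@ler_pMn2r _ 2) // -normrMn mulr2n.
  have -> : p + p = z + star z by rewrite sz /z addrCA addrK.
  by rewrite mulr2n -{2}(Cnorm_star HC z) ler_normD.
rewrite -zz (Ccstar HC) !expr2.
by apply: ler_pM.
Qed.
End L.
Local Open Scope classical_set_scope.
Section C.
Variable R : realType.
Variable A : completeNormedModType R[i].
Variables (mul : A -> A -> A) (star : A -> A).
Hypothesis HC : is_Cstar_algebra mul star.

Lemma cvg_mul {T : Type} {F : set_system T} {FF : Filter F} (f g : T -> A) x y :
  f @ F --> x -> g @ F --> y -> (fun t => mul (f t) (g t)) @ F --> mul x y.
Proof.
move=> fx gy.
have fx0 : (fun t => `|f t - x|) @ F --> (0 : R[i]^o).
  by have := cvg_norm ((@subr_cvg0 _ _ _ F FF f x).2 fx); rewrite normr0 => /(_ FF).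
have gy0 : (fun t => `|g t - y|) @ F --> (0 : R[i]^o).
  by have := cvg_norm ((@subr_cvg0 _ _ _ F FF g y).2 gy); rewrite normr0 => /(_ FF).
have u0 : (fun t => `|f t - x| * `|g t - y| + `|f t - x| * `|y| + `|x| * `|g t - y|)
    @ F --> (0 : R[i]^o).
  have := cvgD (cvgD (cvgM fx0 gy0) (cvgM fx0 (cvg_cst `|y|))) (cvgM (cvg_cst `|x|) gy0).
  by rewrite !mul0r mulr0 !addr0 => H; apply: H.
apply/subr_cvg0/cvgr0Pnorm_le => e e0.
have := @cvgr0_norm_le _ _ _ F FF _ u0 e e0.
apply: filterS => t ut.
have E : mul (f t) (g t) - mul x y =
    mul (f t - x) (g t - y) + mul (f t - x) y + mul x (g t - y).
  by rewrite -(CmulDr HC) subrK (CmulBl HC) (CmulBr HC) addrA subrK.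
rewrite ger0_norm ?addr_ge0 ?mulr_ge0 // in ut; rewrite E; apply: le_trans ut.
apply: le_trans (ler_normD _ _) _; apply: lerD; last exact: (Cnorm_mul HC).
apply: le_trans (ler_normD _ _) _; apply: lerD; exact: (Cnorm_mul HC).
Qed.

Lemma cvg_star {T : Type} {F : set_system T} {FF : Filter F} (f : T -> A) x :
  f @ F --> x -> (fun t => star (f t)) @ F --> star x.
Proof.
move=> /cvgrPdist_lt fx; apply/cvgrPdist_lt => e e0.
by apply: filterS (fx e e0) => t; rewrite -(CstarB HC) (Cnorm_star HC).
Qed.
End C.
Section Sq.
Variable R : realType.
Variable A : completeNormedModType R[i].
Variables (mul : A -> A -> A) (star : A -> A).
Hypothesis HC : is_Cstar_algebra mul star.

Lemma comm_mul z a b : mul z a = mul a z -> mul z b = mul b z ->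
  mul z (mul a b) = mul (mul a b) z.
Proof.
move=> za zb; rewrite -(CmulA HC) za (CmulA HC) zb (CmulA HC) //.
Qed.

Lemma geo_small (s e : R[i]) : 0 <= s -> s < 1 -> 0 < e ->
  exists N : nat, s ^+ N < e.
Proof.
move=> s0 s1 e0.
have sr : s \is Num.real by apply: ger0_real.
have er : e \is Num.real by apply: gtr0_real.
rewrite -(RRe_real sr) -(RRe_real er) in s0 s1 e0 *.
rewrite ler0c in s0; rewrite ltcR in s1; rewrite (ltcR 0) in e0.
have g : @geometric R 1%R (complex.Re s) @ \oo --> (0 : R^o).
  by apply: cvg_geometric; rewrite ger0_norm.
have [N _ HN] := @cvgr0_norm_lt _ _ _ _ _ _ g _ e0.
exists N; have := HN N (leqnn N); rewrite /geometric /= mul1r ger0_norm ?exprn_ge0 //.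
by rewrite -rmorphXn ltcR.
Qed.

Lemma sqrt_ex k : star k = k -> `|k| < 1 ->
  exists w, [/\ star w = w, mul w k = mul k w & mul w w + mul k k = w + w].
Proof.
move=> sk k1.
set s := `|mul k k|.
have s_def : s = `|k| ^+ 2 by rewrite /s -{1}sk (Ccstar HC).
have s0 : 0 <= s by exact: normr_ge0.
have k0 : 0 <= `|k| by exact: normr_ge0.
have s1 : s < 1 by rewrite s_def expr2; apply: mulr_ilt1.
have ss : s * s <= s by apply: ler_piMl => //; exact: ltW.
pose T w := (2^-1 : R[i]) *: (mul w w + mul k k).
pose P w := `|w| <= s /\ star w = w /\ (forall z, mul z k = mul k z -> mul z w = mul w z).
have h2 : `|(2^-1 : R[i])| = 2^-1 by rewrite ger0_norm // invr_ge0 ler0n.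
have h2s : (2^-1 : R[i]) * (s + s) = s by field.
have c2 : ((2^-1 : R[i])^*)%R = 2^-1 by rewrite fmorphV rmorph_nat.
have PT : forall w, P w -> P (T w).
  move=> w [wn [ws wc]]; split; [|split].
  - rewrite /T normrZ h2 -h2s; apply: ler_wpM2l; first by rewrite invr_ge0 ler0n.
    apply: le_trans (ler_normD _ _) _; apply: lerD => //.
    apply: le_trans (Cnorm_mul HC _ _) _; apply: le_trans ss.
    by apply: ler_pM.
  - by rewrite /T (CstarZ HC) c2 (CstarD HC) !(Cstar_mul HC) ws sk.
  - move=> z zk; rewrite /T (CmulZr HC) (CmulZl HC) (CmulDr HC) (CmulDl HC).
    by rewrite comm_mul ?wc // [mul z (mul k k)]comm_mul.
have Pc : forall u v, P u -> P v -> `|T u - T v| <= s * `|u - v|.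
  move=> u v [un [us uc]] [vn [vs vc]].
  have uv : mul u v = mul v u by apply: vc; rewrite uc.
  have -> : T u - T v = (2^-1 : R[i]) *: mul (u - v) (u + v).
    rewrite /T -scalerBr; congr (_ *: _).
    rewrite (CmulBl HC) !(CmulDr HC) uv.
    rewrite [mul v u + mul v v]addrC !opprD addrACA subrr addr0 addrACA subrr addr0 //. 
  rewrite normrZ h2 -h2s -mulrA; apply: ler_wpM2l; first by rewrite invr_ge0 ler0n.
  apply: le_trans (Cnorm_mul HC _ _) _; rewrite [_ * `|u - v|]mulrC; apply: ler_wpM2l => //.
  by apply: le_trans (ler_normD _ _) _; apply: lerD.
pose y n := iter n T 0.
have P0 : P 0 by split; [rewrite normr0|split; [exact: (Cstar0 HC)|move=> z _; rewrite (Cmul0l HC) (Cmul0r HC)]].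
have Py : forall n, P (y n) by elim => [|n IH] //=; apply: PT.
have step : forall n, `|y n.+1 - y n| <= s ^+ n.+1.
  elim => [|n IH].
    rewrite /y /= subr0 expr1; by case: (PT _ P0).
  rewrite /y /= -/(y n) -/(y n.+1) exprS.
  apply: le_trans (Pc _ _ (Py n.+1) (Py n)) _.
  by apply: ler_wpM2l.
have s1' : 0 <= 1 - s by rewrite subr_ge0 ltW.
have D : forall n m, `|y n - y (n + m)%N| * (1 - s) <= s ^+ n.+1 * (1 - s ^+ m).
  move=> n; elim => [|m IH].
    by rewrite addn0 subrr normr0 mul0r expr0 subrr mulr0.
  have -> : y n - y (n + m.+1)%N = (y n - y (n + m)%N) + (y (n + m)%N - y (n + m).+1).
    by rewrite addnS addrA subrK.
  apply: le_trans (_ : (`|y n - y (n + m)%N| + s ^+ (n + m).+1) * (1 - s) <= _).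
    apply: ler_wpM2r => //; apply: le_trans (ler_normD _ _) _; apply: lerD => //.
    by rewrite distrC step.
  rewrite mulrDl; apply: le_trans (lerD IH (lexx _)) _.
  rewrite -addSn exprD [s ^+ m.+1]exprSr.
  rewrite le_eqVlt; apply/orP; left; apply/eqP; ring.
have cy : cvgn y.
  apply/cauchy_cvgP; apply: cauchy_exP => e e0.
  have e1 : 0 < e * (1 - s) by rewrite mulr_gt0 // subr_gt0.
  have [N HN] := geo_small s0 s1 e1.
  exists (y N); exists N => // n /= Nn.
  rewrite -ball_normE /ball_ /=.
  rewrite -(subnKC Nn).
  have := D N (n - N)%N.
  move=> H; rewrite -(ltr_pM2r (x := 1 - s)) ?subr_gt0 //.
  apply: le_lt_trans H _; apply: le_lt_trans HN.
  rewrite exprS; apply: le_trans (_ : s * s ^+ N <= s ^+ N).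
    rewrite -[leRHS]mulr1; apply: ler_wpM2l; first by rewrite mulr_ge0 // exprn_ge0.
    rewrite lerBlDr lerDl; exact: exprn_ge0.
  by apply: ler_piMl => //; [exact: exprn_ge0|exact: ltW].
set w := limn y.
have yw : y @ \oo --> w := cy.
exists w; split.
- have q1 := cvg_star HC yw. move/(_ eventually_filter): q1 => q1.
  have : (fun n => star (y n)) = y by apply/funext => n; case: (Py n) => _ [].
  move=> E; rewrite E in q1.
  by rewrite -(norm_cvg_lim q1).
- have q1 := cvg_mul HC yw (cvg_cst k). move/(_ eventually_filter): q1 => q1. move/(_ eventually_filter): q1 => q1.
  have q2 := cvg_mul HC (cvg_cst k) yw. move/(_ eventually_filter): q2 => q2. move/(_ eventually_filter): q2 => q2.
  have : (fun n => mul (y n) k) = (fun n => mul k (y n)).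
    by apply/funext => n; case: (Py n) => _ [_ ] /(_ k erefl) ->.
  move=> E; rewrite E in q1.
  by rewrite -(norm_cvg_lim q1) (norm_cvg_lim q2).
- have q1 : (fun n => y n.+1) @ \oo --> w by rewrite cvg_shiftS.
  have q2 : (fun n => T (y n)) @ \oo --> T w.
    apply: cvgZ; first exact: cvg_cst.
    have q3 := cvg_mul HC yw yw; move/(_ eventually_filter): q3 => q3.
    by apply: cvgD; [exact: q3|exact: cvg_cst].
  have Tw : T w = w by rewrite -(norm_cvg_lim q2) (norm_cvg_lim q1).
  rewrite -{3 4}Tw /T -scalerDl.
  have -> : (2^-1 + 2^-1 : R[i]) = 1 by field.
  by rewrite scale1r.
Qed.
End Sq.

Lemma zmod_id (V : zmodType) (X Y Z : V) : (X - Y) - (Y - (Y + Y - Z)) = X - Z.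
Proof.
by rewrite opprB [Y + Y - Z - Y]addrAC addrK addrA subrK.
Qed.

Section Contr.
Variable R : realType.
Variable A : completeNormedModType R[i].
Variables (mul : A -> A -> A) (star : A -> A).
Hypothesis HC : is_Cstar_algebra mul star.
Variable phi : A -> A.
Hypothesis phiL : forall k a b, phi (k *: a + b) = k *: phi a + phi b.
Hypothesis phiM : forall a b, phi (mul a b) = mul (phi a) (phi b).
Hypothesis phiS : forall a, phi (star a) = star (phi a).

Lemma phi0 : phi 0 = 0.
Proof. by apply: (addrI (phi 0)); rewrite -{1}(scale1r (phi 0)) -phiL scale1r !addr0. Qed.
Lemma phiZ k a : phi (k *: a) = k *: phi a.
Proof. by have := phiL k a 0; rewrite !addr0 phi0 addr0. Qed.
Lemma phiD a b : phi (a + b) = phi a + phi b.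
Proof. by have := phiL 1 a b; rewrite !scale1r. Qed.
Lemma phiB a b : phi (a - b) = phi a - phi b.
Proof. by rewrite phiD -scaleN1r phiZ scaleN1r. Qed.

Lemma sa_small k : star k = k -> `|k| < 1 -> `|phi k| <= 1.
Proof.
move=> sk k1.
have [w [sw wk ww]] := sqrt_ex HC sk k1.
set a := phi k; set v := phi w.
have sa : star a = a by rewrite /a -phiS sk.
have sv : star v = v by rewrite /v -phiS sw.
have va : mul v a = mul a v by rewrite /a /v -!phiM wk.
have vv : mul v v + mul a a = v + v by rewrite /a /v -!phiM -!phiD ww.
set x := mul a a.
set c := a - mul a v.
have sx : star x = x by rewrite /x (Cstar_mul HC) sa.
have sc : star c = c by rewrite /c (CstarB HC) (Cstar_mul HC) sa sv va.
have xc : mul x c = mul c x.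
  rewrite /c (CmulBl HC) (CmulBr HC) /x -(CmulA HC) (CmulA HC).
  congr (_ - _).
  have h : mul (mul a v) a = mul a (mul a v) by rewrite (CmulA HC) va.
  by rewrite (comm_mul HC h h) -(CmulA HC) (CmulA HC).
have cc : mul c c = x - mul x x.
  have e1 : mul a (mul a v) = mul x v by rewrite (CmulA HC).
  have e2 : mul (mul a v) a = mul x v by rewrite (CmulA HC) va -(CmulA HC).
  have e3 : mul (mul a v) (mul a v) = mul x (mul v v).
    by rewrite (CmulA HC) -[mul v (mul a v)](CmulA HC) va !(CmulA HC).
  have e4 : mul v v = v + v - x by rewrite -vv addrK.
  rewrite /c (CmulBl HC) !(CmulBr HC) e1 e2 e3 e4 (CmulBr HC) (CmulDr HC).
  exact: zmod_id.
have L := normL HC sx sc xc.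
rewrite cc addrC subrK in L.
have x1 : `|x| <= 1.
  have [x0|x0] := eqVneq `|x| 0; first by rewrite x0 ler01.
  have xp : 0 < `|x| by rewrite lt_def x0 normr_ge0.
  by rewrite -(ler_pM2r xp) mul1r -expr2.
have : `|a| ^+ 2 <= 1 by rewrite -(Ccstar HC) sa.
by rewrite expr_le1.
Qed.

Lemma sa_le h : star h = h -> `|phi h| <= `|h|.
Proof.
move=> sh; apply/ler_addgt0Pr => e e0.
set t := `|h| + e.
have t0 : 0 < t by rewrite /t ltr_wpDl.
have tr : t \is Num.real by apply: gtr0_real.
have ti0 : 0 < t^-1 by rewrite invr_gt0.
set k := t^-1 *: h.
have sk : star k = k by rewrite /k (CstarZ HC) sh fmorphV; congr (_^-1 *: _); exact: conj_Creal tr.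
have k1 : `|k| < 1.
  rewrite /k normrZ gtr0_norm // -(ltr_pM2l t0) mulrA mulfV ?gt_eqF // mul1r mulr1.
  by rewrite /t ltrDl.
have := sa_small sk k1.
rewrite /k phiZ normrZ gtr0_norm // -(ler_pM2l t0) mulrA mulfV ?gt_eqF // mul1r mulr1.
by [].
Qed.

Lemma contractive u : `|phi u| <= `|u|.
Proof.
have s : star (mul (star u) u) = mul (star u) u by rewrite (Cstar_mul HC) (CstarK HC).
have := sa_le s.
rewrite phiM phiS (Ccstar HC) (Ccstar HC).
by rewrite ler_sqr ?nnegrE.
Qed.
End Contr.

Section Main.
Variable R : realType.
Variable A : completeNormedModType R[i].
Variables (mul : A -> A -> A) (star : A -> A).
Hypothesis HC : is_Cstar_algebra mul star.

Lemma nondeg d : (forall w, mul d w = 0) -> d = 0.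
Proof.
move=> H.
have : `|star d| ^+ 2 = 0 by rewrite -(Ccstar HC) (CstarK HC) H normr0.
move/eqP; rewrite expf_eq0 /= normr_eq0 => /eqP sd.
by rewrite -(CstarK HC d) sd (Cstar0 HC).
Qed.

Lemma mult_R (m : multiplier A) x y : is_multiplier mul m ->
  m.2 (mul x y) = mul x (m.2 y).
Proof.
move=> Hm; apply/eqP; rewrite -subr_eq0; apply/eqP; apply: nondeg => w.
rewrite (CmulBl HC) -Hm (CmulA HC) Hm -(CmulA HC) subrr //.
Qed.

Lemma cont_act (G : topologicalType) (al : G -> A -> A) (x : G -> A) :
  (forall r u, `|al r u| <= `|u|) -> (forall r a b, al r (a - b) = al r a - al r b) ->
  (forall y, continuous (fun r => al r y)) -> continuous x ->
  continuous (fun r => al r (x r)).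
Proof.
move=> Hn HB Hy Hx r0; apply/cvgrPdist_lt => e e0.
have e2 : 0 < e / 2 by rewrite divr_gt0 // ltr0n.
have h1 := (cvgrPdist_lt _ _).1 (Hx r0) _ e2.
have h2 := (cvgrPdist_lt _ _).1 (Hy (x r0) r0) _ e2.
move: (h1 (nbhs_filter r0)) (h2 (nbhs_filter r0)) => {}h1 {}h2.
apply: (filterS2 _ _ h1 h2) => r H1 H2.
have -> : al r0 (x r0) - al r (x r) = (al r0 (x r0) - al r (x r0)) + al r (x r0 - x r).
  by rewrite HB addrA subrK.
apply: le_lt_trans (ler_normD _ _) _; rewrite [e]splitr; apply: ltrD => //.
exact: le_lt_trans (Hn _ _) H1.
Qed.
End Main.

Unset Implicit Arguments.
Theorem mainTheorem11 (R : realType) (G : topologicalType)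
    (gmul : G -> G -> G) (gone : G) (ginv : G -> G)
    (A : completeNormedModType R[i]) (mul : A -> A -> A) (star : A -> A)
    (alpha : G -> A -> A)
    (Hsys : is_Cstar_dynamical_system gmul gone ginv mul star alpha) :
  (* (i) *)
  (forall c : G -> multiplier A,
     is_cocycle gmul ginv alpha (mult_invertible mul) c ->
     strictly_continuous c ->
     (exists cinv : G -> multiplier A,
        (forall r, mult_inverse mul (c r) (cinv r)) /\ strictly_continuous cinv) ->
     forall a : A,
       strictly_continuous (fun r => mult_mul (mult_of mul (alpha r a)) (c r)))
  /\
  (* (ii) *)
  (forall c : G -> multiplier A,
     is_cocycle gmul ginv alpha
       (fun m => mult_invertible mul m /\ mult_central mul m) c ->
     strictly_continuous c ->
     forall a : A,
       strictly_continuous (fun r => mult_mul (mult_of mul (alpha r a)) (c r))).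
Proof.
case: Hsys => [[gA [g1 [gV [gmulc [ginvc _]]]]] [HC [Haut [Hcomp [Hone Hcont]]]]].
have comp1 : forall c : G -> multiplier A, strictly_continuous c -> forall a b,
    continuous (fun r => (mult_mul (mult_of mul (alpha r a)) (c r)).1 b).
  move=> c cc a b r; rewrite /mult_mul /mult_of /=.
  exact: (cvg_mul HC (Hcont a r) ((cc b).1 r)).
split.
- move=> c [cX ccoc] cc [cinv [cinvI cinvc]] a b; split; first exact: comp1.
  rewrite /mult_mul /mult_of /=.
  have ginv1 : ginv gone = gone.
    by have := (gV gone).1; rewrite (g1 (ginv gone)).2.
  have aid : forall r z, alpha r (alpha (ginv r) z) = z.
    by move=> r z; rewrite -Hcomp (gV r).2 Hone.
  have c1 : forall z, (c gone).2 z = z.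
    move=> z; case: (ccoc gone gone) => _ H.
    have := H z; rewrite (g1 gone).1 /alpha_mult /= ginv1 !Hone => Hz.
    case: (cX gone) => _ [n [_ [[_ Hn2] _]]].
    have := Hn2 z; have := Hn2 ((c gone).2 z); rewrite /mult_mul /mult_one /= -Hz.
    by move=> -> .
  have key : forall r z, (c r).2 (alpha r z) = alpha r ((cinv (ginv r)).2 z).
    move=> r z; set u := (c r).2 (alpha r z).
    case: (ccoc r (ginv r)) => _ H.
    have := H (alpha r z); rewrite (gV r).2 c1 /alpha_mult /mult_mul /= -/u => Hz.
    case: (Haut r) => _ [_ [_ /bij_inj inj]].
    have {}Hz := inj _ _ Hz.
    case: (cinvI (ginv r)) => _ [[_ Hi2] _].
    by rewrite Hz; have := Hi2 (alpha (ginv r) u); rewrite /mult_mul /mult_one /= => ->; rewrite aid.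
  have -> : (fun r => (c r).2 (mul b (alpha r a))) =
      (fun r => mul b (alpha r ((cinv (ginv r)).2 a))).
    apply/funext => r; case: (cX r) => Hm _.
    by rewrite (mult_R HC _ _ Hm) key.
  have xc : continuous (fun r => (cinv (ginv r)).2 a).
    move=> r; exact: (continuous_comp (ginvc r) ((cinvc a).2 (ginv r))).
  have ac : continuous (fun r => alpha r ((cinv (ginv r)).2 a)).
    apply: (cont_act _ _ (Hcont) xc).
    - move=> r u; case: (Haut r) => [L [M [S _]]]; exact: (contractive HC L M S).
    - move=> r u v; case: (Haut r) => [L _]; exact: (phiB L).
  move=> r; exact: (cvg_mul HC (cvg_cst b) (ac r)).
- move=> c [cX ccoc] cc a b; split; first exact: comp1.
  rewrite /mult_mul /mult_of /=.
  have E : forall r, (c r).2 (mul b (alpha r a)) = mul ((c r).2 b) (alpha r a).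
    move=> r; case: (cX r) => [[Hm _] [_ Hcen]].
    have Hn : is_multiplier mul (mult_of mul (alpha r a)).
      by move=> u v; rewrite /mult_of /= (CmulA HC).
    by case: (Hcen _ Hn) => _ /(_ b) /= ->.
  have -> : (fun r => (c r).2 (mul b (alpha r a))) = (fun r => mul ((c r).2 b) (alpha r a)).
    by apply/funext => r; exact: E.
  move=> r; exact: (cvg_mul HC ((cc b).2 r) (Hcont a r)).
Qed.
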